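(* Let $\mathcal{A}$ be a central and essential arrangement in $\mathbb{Q}^l$ as in the context, let $1\le i_1<\dots<i_l\le n$, let $\sigma$ be a term ordering, and let $p$ be a prime that is good for $\mathcal{A}$ and $\sigma$-lucky for the ideal $I_{\mathbb{Z}}=\langle\alpha_{i_1},\dots,\alpha_{i_l}\rangle\subseteq\mathbb{Z}[x_1,\dots,x_l]$. Then $(i_1,\dots,i_l)\in\mathfrak{I}(\mathcal{A})$ if and only if $(i_1,\dots,i_l)\in\mathfrak{I}(\mathcal{A}_p)$.
   Context: $\mathcal{A}=\{H_1,\dots,H_n\}$ is an arrangement of $n$ distinct, linearly ordered linear hyperplanes in $\mathbb{Q}^l$ with $\bigcap_iH_i=\{0\}$. $H_i=\{\alpha_i=0\}$ with $\alpha_i\in\mathbb{Z}[x_1,\dots,x_l]$ a nonzero linear form whose coefficients are not all divisible by any prime; $Q(\mathcal{A})=\prod\alpha_i$. $\pi_p$ denotes reduction mod $p$, $(\alpha_i)_p=\pi_p(\alpha_i)$; $p$ is good if $\pi_p(Q(\mathcal{A}))$ is reduced (no $(\alpha_i)_p$ is a scalar multiple of $(\alpha_j)_p$, $i<j$), and then $\mathcal{A}_p=\{(H_1)_p,\dots,(H_n)_p\}$ in $\mathbb{F}_p^l$, $(H_i)_p=\{(\alpha_i)_p=0\}$. For an arrangement $\{G_1,\dots,G_n\}$ in $K^l$, $\mathfrak{I}=\{(i_1,\dots,i_l): i_1<\dots<i_l,\ \dim(G_{i_1}\cap\dots\cap G_{i_l})=0\}$. Gröbner notions: for a term ordering $\sigma$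 and nonzero $f\in\mathbb{Z}[x_1,\dots,x_l]$, $\mathrm{LT}_\sigma(f)$ is the $\sigma$-largest term in the support of $f$, $\mathrm{LC}_\sigma(f)$ its coefficient, $\mathrm{LM}_\sigma(f)=\mathrm{LC}_\sigma(f)\mathrm{LT}_\sigma(f)$. A finite set $G$ of nonzero elements of an ideal $I\subseteq\mathbb{Z}[x_1,\dots,x_l]$ is a minimal strong $\sigma$-Gröbner basis of $I$ if $G$ generates $I$, for every nonzero $f\in I$ some $\mathrm{LM}_\sigma(g)$, $g\in G$, divides $\mathrm{LM}_\sigma(f)$, and no $\mathrm{LM}_\sigma(g)$ divides $\mathrm{LM}_\sigma(g')$ for distinct $g,g'\in G$. Such bases exist for nonzero $I$ and the set of their leading coefficients does not depend on the choice. A prime $p$ is $\sigma$-lucky for $I$ if $p$ divides no leading coefficient of an element of a minimal strong $\sigma$-Gröbner basis of $I$. *)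

(* Defs.v *)
From HB Require Import structures.
From mathcomp Require Import all_boot all_order all_algebra.
From mathcomp Require Import mpoly.
Set Implicit Arguments. Unset Strict Implicit. Unset Printing Implicit Defensive.
Import Order.TTheory GRing.Theory Num.Theory.
Local Open Scope ring_scope.

(* An arrangement {G_1,...,G_n} of linear hyperplanes in K^l is given by the
   n x l matrix B whose i-th row is the coefficient vector of the linear form
   defining G_i. *)

Definition hyp (K : fieldType) (l : nat) (a : 'rV[K]_l) : 'M[K]_l :=
  kermx a^T.

Definition in_frakI (K : fieldType) (n l : nat) (B : 'M[K]_(n, l))
    (idx : 'I_l -> 'I_n) : Prop :=
  (forall a b : 'I_l, (a < b)%N -> (idx a < idx b)%N) /\
  \rank (\bigcap_(k < l) hyp (row (idx k) B))%MS = 0%N.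

Definition matQ (n l : nat) (A : 'M[int]_(n, l)) : 'M[rat]_(n, l) :=
  map_mx (fun z : int => z%:~R) A.
Definition matp (p : nat) (n l : nat) (A : 'M[int]_(n, l)) : 'M['F_p]_(n, l) :=
  map_mx (fun z : int => z%:~R) A.

Definition central_essential_arrangement (n l : nat) (A : 'M[int]_(n, l)) :=
  [/\
      forall i : 'I_n, row i A != 0,
      forall (i : 'I_n) (q : nat), prime q ->
        ~ (forall j : 'I_l, (q%:Z %| A i j)%Z),
      forall i j : 'I_n, i != j ->
        ~~ (hyp (row i (matQ A)) == hyp (row j (matQ A)))%MS &
      \rank (\bigcap_(i < n) hyp (row i (matQ A)))%MS = 0%N].

Definition good_prime (n l : nat) (A : 'M[int]_(n, l)) (p : nat) : Prop :=
  prime p /\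
  forall i j : 'I_n, (i < j)%N ->
    forall c : 'F_p, row i (matp p A) != c *: row j (matp p A).

Definition linform (n l : nat) (A : 'M[int]_(n, l)) (i : 'I_n) : {mpoly int[l]} :=
  \sum_(j < l) A i j *: 'X_j.

Definition term_order (l : nat) (sigma : rel 'X_{1..l}) : Prop :=
  [/\ reflexive sigma, transitive sigma, antisymmetric sigma & total sigma] /\
  (forall m1 m2 m : 'X_{1..l},
     sigma m1 m2 -> sigma (mnm_add m1 m) (mnm_add m2 m)) /\
  (forall m : 'X_{1..l}, sigma (@mnm0 l) m).

Definition LTs (l : nat) (sigma : rel 'X_{1..l}) (f : {mpoly int[l]}) : 'X_{1..l} :=
  foldr (fun m acc => if sigma m acc then acc else m)
        (head (@mnm0 l) (msupp f)) (msupp f).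

Definition LCs (l : nat) (sigma : rel 'X_{1..l}) (f : {mpoly int[l]}) : int :=
  f@_(LTs sigma f).

Definition LM_dvd (l : nat) (sigma : rel 'X_{1..l}) (g f : {mpoly int[l]}) : bool :=
  (LCs sigma g %| LCs sigma f)%Z && lem (LTs sigma g) (LTs sigma f).

Definition gen_ideal (l : nat) (s : seq {mpoly int[l]}) (f : {mpoly int[l]}) : Prop :=
  exists c : seq {mpoly int[l]},
    size c = size s /\ f = \sum_(k < size s) c`_k * s`_k.

Definition min_strong_GB (l : nat) (sigma : rel 'X_{1..l})
    (I : {mpoly int[l]} -> Prop) (G : seq {mpoly int[l]}) : Prop :=
  [/\ forall g, g \in G -> g != 0 /\ I g,
      forall f, gen_ideal G f <-> I f,
      forall f, I f -> f != 0 -> exists2 g, g \in G & LM_dvd sigma g f &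
      forall g g', g \in G -> g' \in G -> g != g' -> ~~ LM_dvd sigma g g'].

Definition sigma_lucky (l : nat) (sigma : rel 'X_{1..l})
    (I : {mpoly int[l]} -> Prop) (p : nat) : Prop :=
  exists G : seq {mpoly int[l]},
    min_strong_GB sigma I G /\
    forall g, g \in G -> ~~ (p%:Z %| LCs sigma g)%Z.

(* Main.v *)
Require Import Defs.
From HB Require Import structures.
From mathcomp Require Import all_boot all_order all_algebra.
From mathcomp Require Import mpoly.
From mathcomp Require Import ring.
Import Order.TTheory GRing.Theory Num.Theory.
Local Open Scope ring_scope.
Set Implicit Arguments. Unset Strict Implicit. Unset Printing Implicit Defensive.

Lemma col_mul (R : pzSemiRingType) m n p (A : 'M[R]_(m, n)) (B : 'M[R]_(n, p)) j :
  A *m col j B = col j (A *m B).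
Proof. by apply/matrixP => i k; rewrite !mxE; apply: eq_bigr => t _; rewrite !mxE. Qed.

Lemma rank_cap_det (K : fieldType) (n l : nat) (B : 'M[K]_(n, l)) (idx : 'I_l -> 'I_n) :
  \rank (\bigcap_(k < l) hyp (row (idx k) B))%MS = 0%N <-> \det (rowsub idx B) != 0.
Proof.
set N := rowsub idx B.
have E : \rank (\bigcap_(k < l) hyp (row (idx k) B))%MS = \rank (kermx N^T).
  apply/eqP; rewrite eqn_leq; apply/andP; split; apply: mxrankS.
    rewrite sub_kermx; apply/eqP/matrixP => i j.
    have := @bigcapmx_inf _ _ j xpredT _ _ (fun k => hyp (row (idx k) B)) _ isT (submx_refl _).
    rewrite /hyp -(row_rowsub idx B) sub_kermx tr_row col_mul => /eqP/matrixP/(_ i 0).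
    by rewrite !mxE => ->.
  apply/sub_bigcapmxP => k _; rewrite /hyp -(row_rowsub idx B) sub_kermx tr_row col_mul.
  by rewrite mulmx_ker; apply/eqP/matrixP => i j; rewrite !mxE.
rewrite E mxrank_ker mxrank_tr -unitfE -unitmxE -row_free_unit /row_free.
have := rank_leq_row N; split.
  by move=> h; apply/eqP; apply/anti_leq; rewrite H /= -subn_eq0 h.
by move/eqP => ->; rewrite subnn.
Qed.

Section LT.
Variables (l : nat) (sigma : rel 'X_{1..l}).
Hypotheses (tr : transitive sigma) (to : total sigma) (an : antisymmetric sigma).

Lemma foldr_max (s : seq 'X_{1..l}) a :
  let r := foldr (fun m acc => if sigma m acc then acc else m) a s in
  r \in a :: s /\ forall m, m \in s -> sigma m r.
Proof.
elim: s => [|x s [IH1 IH2]] /=; first by rewrite mem_seq1.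
case: ifP => h.
  split; first by move: IH1; rewrite !inE => /orP [->|->]; rewrite ?orbT.
  by move=> m; rewrite inE => /orP [/eqP -> //| /IH2].
split; first by rewrite !inE eqxx orbT.
have hx : sigma (foldr (fun m acc => if sigma m acc then acc else m) a s) x.
  by have := to x (foldr (fun m acc => if sigma m acc then acc else m) a s); rewrite h.
move=> m; rewrite inE => /orP [/eqP ->|/IH2 hm]; last exact: tr hm hx.
by have := to x x; rewrite orbb.
Qed.

Lemma LTs_max (f : {mpoly int[l]}) m : m \in msupp f -> sigma m (LTs sigma f).
Proof. by move=> hm; have [_ ] := foldr_max (msupp f) (head 0%MM (msupp f)); apply. Qed.

Lemma LTs_in (f : {mpoly int[l]}) : f != 0 -> LTs sigma f \in msupp f.
Proof.
move=> fn0; have [h _] := foldr_max (msupp f) (head 0%MM (msupp f)).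
move: h; rewrite /LTs; set r := foldr _ _ _; rewrite inE => /orP [/eqP ->|//].
by move: fn0; rewrite -msupp_eq0; case: (msupp f) => [|x s] //= _; rewrite inE eqxx.
Qed.

Lemma LTs_uniq (f : {mpoly int[l]}) t :
  t \in msupp f -> (forall m, m \in msupp f -> sigma m t) -> LTs sigma f = t.
Proof.
move=> ht hm; have fn0 : f != 0 by rewrite -msupp_eq0; apply/eqP => E; rewrite E in ht.
apply: an; rewrite (hm _ (@LTs_in f fn0)) /=; exact: LTs_max.
Qed.

Lemma LCs_neq0 (f : {mpoly int[l]}) : f != 0 -> LCs sigma f != 0.
Proof. by move/LTs_in; rewrite mcoeff_msupp. Qed.
End LT.

Lemma lem_U1 l (m : 'X_{1..l}) j : lem m U_(j)%MM -> m = 0%MM \/ m = U_(j)%MM.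
Proof.
move/forallP => h.
have hi : forall i, i != j -> m i = 0%N.
  by move=> i /negbTE ne; have := h i; rewrite mnm1E eq_sym ne leqn0 => /eqP.
have := h j; rewrite mnm1E eqxx; case E: (m j) => [|[|//]] _.
  by left; apply/mnmP => i; rewrite mnm0E; case: (eqVneq i j) => [->//|/hi].
by right; apply/mnmP => i; rewrite mnm1E; case: (eqVneq j i) => [<-//|ne]; rewrite hi // eq_sym.
Qed.

Lemma coefMX l (e : {mpoly int[l]}) j m :
  (e * 'X_j)@_m = if lem U_(j)%MM m then e@_(m - U_(j)%MM)%MM else 0.
Proof.
case: ifP => h.
  by rewrite -{1}(submK h) addmC mcoeffMX.
apply/eqP; rewrite mcoeff_eq0 (perm_mem (msuppMX _ _)); apply/negP => /mapP [m' _ E].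
by move: h; rewrite E lem_addr.
Qed.

Lemma saturate l (s : rel 'I_l) (p : nat) (L : 'rV[int]_l -> Prop) :
  prime p -> transitive s -> total s -> antisymmetric s ->
  L 0 -> (forall u v, L u -> L v -> L (u + v)) -> (forall (a : int) u, L u -> L (a *: u)) ->
  (forall u : 'rV[int]_l, u != 0 -> exists j, u 0 j != 0 /\ forall i, u 0 i != 0 -> s i j) ->
  (forall (u : 'rV[int]_l) j, L u -> u 0 j != 0 -> (forall i, u 0 i != 0 -> s i j) ->
     exists w, [/\ L w, ~~ (w 0 j \in dvdz p%:Z), (u 0 j \in dvdz (w 0 j)) &
                   forall i, w 0 i != 0 -> s i j]) ->
  forall v, L (p%:Z *: v) -> L v.
Proof.
move=> pr tr to an L0 LD LZ top red.
have p0 : p%:Z != 0 by rewrite eqz_nat -lt0n prime_gt0.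
have sref : forall i, s i i by move=> i; have := to i i; rewrite orbb.
pose D (u : 'rV[int]_l) := [set i | [exists i', (u 0 i' != 0) && s i i']].
suff H : forall k v, (#|D (p%:Z *: v)| <= k)%N -> L (p%:Z *: v) -> L v.
  by move=> v; apply: H (leqnn _).
elim=> [|k IH] v hk hL.
all: case: (eqVneq (p%:Z *: v) 0) => [E|nz].
all: try (have -> : v = 0 by apply/matrixP => i j; move/matrixP: E => /(_ i j);
      rewrite !mxE => /eqP; rewrite mulf_eq0 (negbTE p0) /= => /eqP).
all: try exact: L0.
all: have [j [hj hmax]] := top _ nz.
all: have jD : j \in D (p%:Z *: v) by rewrite inE; apply/existsP; exists j; rewrite hj sref.
  by move: hk; rewrite leqn0 => /eqP/cards0_eq E; rewrite E inE in jD.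
have [w [hw hnd hdiv hws]] := red _ j hL hj hmax.
have [a Ea] := dvdzP hdiv.
have cop : coprimez p%:Z (w 0 j).
  by rewrite coprimezE /= prime_coprime // -dvdzE.
have : (a * w 0 j) \in dvdz p%:Z by rewrite -Ea mxE dvdz_mulr.
rewrite Gauss_dvdzl // => /dvdzP [b Eb].
pose v' := v - b *: w.
have Ev : p%:Z *: v' = p%:Z *: v + (- a) *: w.
  by apply/matrixP => i i'; rewrite !mxE Eb; ring.
have hL' : L (p%:Z *: v') by rewrite Ev; apply: LD hL (LZ _ _ hw).
have Ea' := Ea; rewrite mxE in Ea'.
have supp' : forall i', (p%:Z *: v') 0 i' != 0 -> s i' j && (i' != j).
  move=> i'; rewrite Ev !mxE.
  case: (eqVneq i' j) => [->|ne]; first by rewrite Ea' mulNr subrr eqxx.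
  move=> h; apply/andP; split=> //.
  case: (eqVneq (w 0 i') 0) => [w0|/hws //].
  by move: h; rewrite w0 mulr0 addr0 => h; apply: hmax; rewrite mxE.
have sub : D (p%:Z *: v') \subset D (p%:Z *: v) :\ j.
  apply/subsetP => i; rewrite !inE => /existsP [i' /andP [h1 h2]].
  have /andP [h3 h4] := supp' _ h1.
  apply/andP; split.
    apply/negP => /eqP E; subst i.
    by move: h4; rewrite (an j i') ?eqxx // h2 h3.
  by apply/existsP; exists j; rewrite hj (tr _ _ _ h2 h3).
have hk' : (#|D (p%:Z *: v')| <= k)%N.
  have := subset_leq_card sub; move: hk; rewrite (cardsD1 j (D _)) jD add1n ltnS.
  move=> h1 h2; exact: leq_trans h2 h1.
have := IH _ hk' hL' => Lv'.
have -> : v = v' + b *: w by rewrite /v' subrK.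
by apply: LD Lv' (LZ _ _ hw).
Qed.

Definition lf (l : nat) (u : 'rV[int]_l) : {mpoly int[l]} := \sum_(j < l) u 0 j *: 'X_j.
Arguments lf {l}.

Lemma gen_iff l (F : 'I_l -> {mpoly int[l]}) f :
  gen_ideal [seq F k | k <- enum 'I_l] f <-> exists E : 'I_l -> {mpoly int[l]},
     f = \sum_(k < l) E k * F k.
Proof.
set s := [seq F k | k <- enum 'I_l].
have ss : size s = l by rewrite size_map size_enum_ord.
have sumL : forall c : seq {mpoly int[l]},
    \sum_(k < size s) c`_k * s`_k = \sum_(k < l) c`_k * F k.
  move=> c; rewrite -(big_mkord xpredT (fun k => c`_k * s`_k)) ss big_mkord.
  apply: eq_bigr => k _; congr (_ * _).
  by rewrite (nth_map k) ?size_enum_ord // nth_ord_enum.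
split.
  move=> [c [_ E]]; exists (fun k => c`_k); by rewrite E sumL.
move=> [E ->]; exists [seq E k | k <- enum 'I_l]; split; first by rewrite size_map ss size_enum_ord.
rewrite sumL; apply: eq_bigr => k _; congr (_ * _).
by rewrite (nth_map k) ?size_enum_ord // nth_ord_enum.
Qed.

Lemma mcoeff_sum' l (I : Type) (r : seq I) (P : pred I) (F : I -> {mpoly int[l]}) m :
  (\sum_(i <- r | P i) F i)@_m = \sum_(i <- r | P i) (F i)@_m.
Proof. by elim/big_rec2: _ => [|i x y _ <-]; rewrite ?mcoeff0 ?mcoeffD. Qed.

Lemma eqU l (i j : 'I_l) : (U_(i)%MM == U_(j)%MM) = (i == j).
Proof.
case: (eqVneq i j) => [->|ne]; first by rewrite eqxx.
apply/negbTE/negP => /eqP /mnmP /(_ i); rewrite !mnm1E eqxx eq_sym.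
by move/negbTE: ne => ->.
Qed.

Lemma submm' l (m : 'X_{1..l}) : (m - m)%MM = 0%MM.
Proof. by apply/mnmP => i; rewrite mnmBE subnn mnm0E. Qed.

Lemma lem_U l (i j : 'I_l) : lem U_(j)%MM U_(i)%MM = (j == i).
Proof.
case: (eqVneq j i) => [->|ne]; first by apply/forallP => k.
apply/negbTE/negP => /forallP /(_ j); rewrite !mnm1E eqxx eq_sym.
by move/negbTE: ne => ->.
Qed.

Lemma lem_U0 l (j : 'I_l) : lem U_(j)%MM 0%MM = false.
Proof. by apply/negbTE/negP => /forallP /(_ j); rewrite mnm1E mnm0E eqxx. Qed.

Lemma coefMlf l (e : {mpoly int[l]}) (r : 'rV[int]_l) m :
  (e * lf r)@_m = \sum_(j < l) r 0 j * (e * 'X_j)@_m.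
Proof.
rewrite /lf mulr_sumr mcoeff_sum'; apply: eq_bigr => j _.
rewrite -scalerAr; exact: mcoeffZ.
Qed.

Lemma ideal_coef l (M : 'M[int]_l) (E : 'I_l -> {mpoly int[l]}) :
  let f := \sum_(k < l) E k * lf (row k M) in
  f@_0%MM = 0 /\ forall i, f@_(U_(i)%MM) = ((\row_k (E k)@_0%MM) *m M) 0 i.
Proof.
move=> f; split.
  rewrite /f mcoeff_sum' big1 // => k _; rewrite coefMlf big1 // => j _.
  by rewrite coefMX lem_U0 mulr0.
move=> i; rewrite /f mcoeff_sum' !mxE; apply: eq_bigr => k _.
rewrite coefMlf (bigD1 i) //= big1 => [|j ne]; last by rewrite coefMX lem_U (negbTE ne) mulr0.
by rewrite coefMX lem_U eqxx submm' !mxE addr0 mulrC.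
Qed.

Lemma lf_coefU l (u : 'rV[int]_l) i : (lf u)@_(U_(i)%MM) = u 0 i.
Proof.
rewrite /lf mcoeff_sum' (bigD1 i) //= big1 => [|j ne].
  by rewrite mcoeffZ mcoeffX eqxx mulr1 addr0.
rewrite mcoeffZ mcoeffX; case: eqP => [E|]; last by rewrite mulr0.
by move: ne; rewrite -eqU E eqxx.
Qed.

Lemma lf_supp l (u : 'rV[int]_l) m : m \in msupp (lf u) -> exists2 i, m = U_(i)%MM & u 0 i != 0.
Proof.
rewrite mcoeff_msupp => h.
have [i /andP [/eqP hi hu]|] := pickP (fun i => (U_(i)%MM == m) && (u 0 i != 0)).
  by exists i.
move=> H; move: h; rewrite /lf mcoeff_sum' big1 ?eqxx // => i _.
rewrite mcoeffZ mcoeffX.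
case: (eqVneq (u 0 i) 0) => [->|nz]; first by rewrite mul0r.
case: eqP => [E|]; last by rewrite mulr0.
by have := H i; rewrite /= E eqxx nz.
Qed.

Lemma lf_mul l (M : 'M[int]_l) (e : 'rV[int]_l) :
  lf (e *m M) = \sum_(k < l) (e 0 k)%:MP * lf (row k M).
Proof.
apply/mpolyP => m; rewrite /lf !mcoeff_sum'.
under [RHS]eq_bigr => k _ do rewrite mcoeffCM mcoeff_sum' mulr_sumr.
rewrite exchange_big /=; apply: eq_bigr => j _.
rewrite mcoeffZ !mxE mulr_suml; apply: eq_bigr => k _.
by rewrite mcoeffZ !mxE mulrA.
Qed.

Arguments rank_cap_det {K n l B idx}.

Theorem proposition4p11 (n l : nat) (A : 'M[int]_(n, l))
    (idx : 'I_l -> 'I_n) (sigma : rel 'X_{1..l}) (p : nat) :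
  central_essential_arrangement A ->
  (forall a b : 'I_l, (a < b)%N -> (idx a < idx b)%N) ->
  term_order sigma ->
  good_prime A p ->
  sigma_lucky sigma (gen_ideal [seq linform A (idx k) | k <- enum 'I_l]) p ->
  (in_frakI (matQ A) idx <-> in_frakI (matp p A) idx).
Proof.
move=> _ mono [[refl tr an to] _] [pr _] [G [[Gnz Ggen Gdiv _] Gluck]].
set M := rowsub idx A.
set I := gen_ideal [seq linform A (idx k) | k <- enum 'I_l].
have linE : forall k, linform A (idx k) = lf (row k M).
  by move=> k; rewrite /linform /lf; apply: eq_bigr => j _; rewrite !mxE.
have IE : forall f, I f <-> exists E : 'I_l -> {mpoly int[l]},
    f = \sum_(k < l) E k * lf (row k M).
  move=> f; split.
    move/(@gen_iff l (fun k => linform A (idx k)) _) => [E ->]; exists E.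
    by apply: eq_bigr => k _; rewrite linE.
  move=> [E ->]; apply/(@gen_iff l (fun k => linform A (idx k)) _); exists E.
  by apply: eq_bigr => k _; rewrite linE.
pose L := fun h : 'rV[int]_l => exists e : 'rV[int]_l, h = e *m M.
pose s := fun i j : 'I_l => sigma U_(i)%MM U_(j)%MM.
have Ilf : forall e, I (lf (e *m M)).
  by move=> e; apply/IE; exists (fun k => (e 0 k)%:MP); exact: lf_mul.
have lfnz : forall (u : 'rV[int]_l) i, u 0 i != 0 -> lf u != 0.
  by move=> u i h; apply/eqP => E; move: h; rewrite -lf_coefU E mcoeff0 eqxx.
have LTlf : forall (u : 'rV[int]_l) j, u 0 j != 0 -> (forall i, u 0 i != 0 -> s i j) ->
    LTs sigma (lf u) = U_(j)%MM.
  move=> u j hj hmax; apply: (LTs_uniq tr to an).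
    by rewrite mcoeff_msupp lf_coefU.
  by move=> m /lf_supp [i -> /hmax].
have str : transitive s by move=> a b c; exact: tr.
have sto : total s by move=> a b; exact: to.
have san : antisymmetric s by move=> a b /an /eqP; rewrite eqU => /eqP.
have L0 : L 0 by exists 0; rewrite mul0mx.
have LD : forall u v, L u -> L v -> L (u + v).
  by move=> u v [e1 ->] [e2 ->]; exists (e1 + e2); rewrite mulmxDl.
have LZ : forall (a : int) u, L u -> L (a *: u).
  by move=> a u [e ->]; exists (a *: e); rewrite scalemxAl.
have top : forall u : 'rV[int]_l, u != 0 ->
    exists j, u 0 j != 0 /\ forall i, u 0 i != 0 -> s i j.
  move=> u nz.
  have [i hi] : exists i, u 0 i != 0.
    case: (boolP [exists i, u 0 i != 0]) => [/existsP //|/existsPn H].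
    case/eqP: nz; apply/rowP => b; rewrite mxE; apply/eqP/negPn; exact: H.
  have := LTs_in tr to (lfnz _ _ hi); case/lf_supp => j E hj.
  exists j; split => // i0 hi'; rewrite /s -E; apply: (LTs_max tr to).
  by rewrite mcoeff_msupp lf_coefU.
have red : forall (u : 'rV[int]_l) j, L u -> u 0 j != 0 -> (forall i, u 0 i != 0 -> s i j) ->
     exists w, [/\ L w, ~~ (w 0 j \in dvdz p%:Z), (u 0 j \in dvdz (w 0 j)) &
                   forall i, w 0 i != 0 -> s i j].
  move=> u j [e Eu] hj hmax.
  have If : I (lf u) by rewrite Eu; exact: Ilf.
  have [g gG hdvd] := Gdiv _ If (lfnz _ _ hj).
  have [gnz Ig] := Gnz _ gG.
  have [E Eg] := (IE g).1 Ig.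
  have [c0 cU] : g@_0%MM = 0 /\
      forall i, g@_(U_(i)%MM) = ((\row_k (E k)@_0%MM) *m M) 0 i.
    by rewrite Eg; exact: ideal_coef.
  move: hdvd; rewrite /LM_dvd (LTlf u j hj hmax) => /andP [hd hle].
  have LTg : LTs sigma g = U_(j)%MM.
    case: (lem_U1 hle) => // E0; exfalso.
    by have := LCs_neq0 tr to gnz; rewrite /LCs E0 c0 eqxx.
  exists (\row_i g@_(U_(i)%MM)); split.
  - by exists (\row_k (E k)@_0%MM); apply/rowP => b; rewrite mxE cU.
  - by rewrite mxE -LTg; exact: Gluck gG.
  - by move: hd; rewrite /LCs LTg (LTlf u j hj hmax) lf_coefU mxE.
  - move=> i; rewrite mxE -mcoeff_msupp => hi; rewrite /s -LTg.
    exact: (LTs_max tr to) hi.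
have sat := saturate pr str sto san L0 LD LZ top red.
have detQ : \det (rowsub idx (matQ A)) = (\det M)%:~R.
  by rewrite -det_map_mx; congr (\det _); apply/matrixP => a b; rewrite !mxE.
have detP : \det (rowsub idx (matp p A)) = (\det M)%:~R.
  by rewrite -det_map_mx; congr (\det _); apply/matrixP => a b; rewrite !mxE.
have eP : (\det (rowsub idx (matp p A)) != 0) = ~~ (\det M \in dvdz p%:Z).
  by rewrite detP (dvdz_pcharf (pchar_Fp pr)).
have eQ : (\det (rowsub idx (matQ A)) != 0) = (\det M != 0).
  by rewrite detQ intr_eq0.
suff key : \det M != 0 -> ~~ (\det M \in dvdz p%:Z).
  split => [[_ /rank_cap_det]|[_ /rank_cap_det]]; rewrite ?eP ?eQ => h; split => //;
    apply/rank_cap_det; rewrite ?eP ?eQ.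
    exact: key.
  by apply: contraNneq h => ->; exact: dvdz0.
move=> d0; apply/negP => hp.
pose Mp := map_mx (intr : int -> 'F_p) M.
have dMp : \det Mp = 0.
  by rewrite det_map_mx; apply/eqP; rewrite -(dvdz_pcharf (pchar_Fp pr)).
have kz : kermx Mp != 0 by rewrite kermx_eq0 row_free_unit unitmxE unitfE dMp eqxx.
have [i ui] : exists i, row i (kermx Mp) != 0.
  case: (boolP [exists i, row i (kermx Mp) != 0]) => [/existsP //|/existsPn H].
  case/eqP: kz; apply/row_matrixP => i; rewrite row0; apply/eqP/negPn; exact: H.
set u := row i (kermx Mp) in ui.
have uM : u *m Mp = 0 by rewrite /u -row_mul mulmx_ker row0.
pose c := map_mx (fun x : 'F_p => (x : nat)%:Z) u.
have cu : map_mx (intr : int -> 'F_p) c = u.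
  by apply/matrixP => a b; rewrite !mxE /= -pmulrn natr_Zp.
have cM : forall j, (c *m M) 0 j \in dvdz p%:Z.
  move=> j; rewrite (dvdz_pcharf (pchar_Fp pr)).
  have : map_mx (intr : int -> 'F_p) (c *m M) = 0 by rewrite map_mxM cu uM.
  by move/matrixP/(_ 0 j); rewrite !mxE => ->.
pose h := \row_j divz ((c *m M) 0 j) p%:Z.
have ph : p%:Z *: h = c *m M.
  by apply/rowP => j; rewrite mxE [h 0 j]mxE mulrC divzK //; apply: cM.
have [e' he'] : L h by apply: sat; exists c.
have z : (c - p%:Z *: e') *m M = 0 by rewrite mulmxBl -scalemxAl -he' ph subrr.
have z2 : \det M *: (c - p%:Z *: e') = 0.
  by rewrite -mul_mx_scalar -mul_mx_adj mulmxA z mul0mx.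
move/negP: ui; apply; rewrite -cu; apply/eqP/matrixP => a b.
move/matrixP: z2 => /(_ a b); rewrite !mxE => /eqP; rewrite mulf_eq0 (negbTE d0) /=.
rewrite subr_eq0 => /eqP ->; apply/eqP; rewrite -(dvdz_pcharf (pchar_Fp pr)).
by apply: dvdz_mulr; exact: dvdzz.
Qed.
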